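(* Let $m\ge 1$ and $k\in\mathbb N_0$, and let $\mathbf{P}_k(\underline x)$ be an $\mathbb R_{0,m}$-valued homogeneous polynomial of degree $k$ in $\underline x\in\mathbb R^m$ which is monogenic in $\mathbb R^m$, i.e. $\partial_{\underline x}\mathbf{P}_k(\underline x)=0$. Define $\beta_k(0)=1$ and, for $n\ge1$, \[\beta_k(n)=\begin{cases} n, & n \text{ even},\\ 2k+m+n-1, & n\text{ odd},\end{cases}\] and for $0\le j\le n$ put $C_{k,n}(j)=\dfrac{(n-j)!}{\prod_{s=0}^{n-j}\beta_k(s)}$. For $n\ge0$ and $x=(x_0,\underline x)\in\mathbb R^{m+1}$ define \[\mathsf{M}_n^k(x)=\left(\sum_{j=0}^n\binom{n}{j}C_{k,n}(j)\,x_0^j\,\underline x^{\,n-j}\right)\mathbf{P}_k(\underline x).\] Then $\mathsf{M}_0^k(x)=\mathbf{P}_k(\underline x)$, each $\mathsf{M}_n^k$ is an $\mathbb R_{0,m}$-valued polynomial which is monogenic in $\mathbb R^{m+1}$ (i.e. $\partial_x\mathsf{M}_n^k=0$ on $\mathbb R^{m+1}$), and the sequence satisfies the Appell condition \[\tfrac12\,\overline\partial_x\mathsf{M}_n^k(x)=n\,\mathsf{M}_{n-1}^k(x),\qquad n\ge1.\]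
   Context: $\mathbb R_{0,m}$ is the real Clifford algebra generated by an orthonormal basis $e_1,\dots,e_m$ of $\mathbb R^m$ with relations $e_j^2=-1$ and $e_je_k+e_ke_j=0$ for $j\ne k$. A point $x=(x_0,x_1,\dots,x_m)\in\mathbb R^{m+1}$ is identified with the paravector $x_0+\underline x$, where $\underline x=\sum_{j=1}^m x_je_j$; powers $\underline x^{\,n}$ are taken in $\mathbb R_{0,m}$. The Dirac operator is $\partial_{\underline x}=\sum_{j=1}^m e_j\partial_{x_j}$, the generalized Cauchy–Riemann operator is $\partial_x=\partial_{x_0}+\partial_{\underline x}$, and its conjugate is $\overline\partial_x=\partial_{x_0}-\partial_{\underline x}$. A continuously differentiable $\mathbb R_{0,m}$-valued function $f$ is (left) monogenic in an open set of $\mathbb R^{m+1}$ if $\partial_x f=0$ there (operators act from the left), and a function on an open subset of $\mathbb R^m$ is monogenic if $\partial_{\underline x}f=0$. *)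

(* Defs.v *)
From HB Require Import structures.
From mathcomp Require Import all_boot all_order all_algebra.
From mathcomp Require Import all_classical all_reals all_analysis.
Set Implicit Arguments. Unset Strict Implicit. Unset Printing Implicit Defensive.
Import Order.TTheory GRing.Theory Num.Theory.
Import numFieldNormedType.Exports.
Local Open Scope ring_scope.

(* The real Clifford algebra R_{0,m}: an element is the family of its      *)
(* coordinates on the blade basis e_A, A a subset of {0..m-1}              *)
(* (e_A = e_{a1} ... e_{ap} for A = {a1 < ... < ap}, e_emptyset = 1).      *)
Notation Cl R m := {ffun {set 'I_m} -> R}.

(* sign of e_A e_B = sign * e_{A symdiff B}, using e_j^2 = -1 and          *)
(* anticommutation e_j e_k = - e_k e_j (j <> k)                            *)
Definition clscale (R : nzRingType) (m : nat) (c : R) (a : Cl R m) : Cl R m :=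
  [ffun A => c * a A].

Definition blade_sign (R : nzRingType) (m : nat) (A B : {set 'I_m}) : R :=
  (-1) ^+ (#|[set p : 'I_m * 'I_m | (p.1 \in A) && (p.2 \in B) && (p.2 < p.1)%N]|
           + #|A :&: B|).

Definition blade (R : nzRingType) (m : nat) (C : {set 'I_m}) : Cl R m :=
  [ffun D => (D == C)%:R].

Definition clmul (R : nzRingType) (m : nat) (a b : Cl R m) : Cl R m :=
  \sum_(A : {set 'I_m}) \sum_(B : {set 'I_m})
     clscale (a A * b B * blade_sign R A B) (blade R ((A :\: B) :|: (B :\: A))).

Definition cl1 (R : nzRingType) (m : nat) : Cl R m := blade R (finset.set0 : {set 'I_m}).
Definition clgen (R : nzRingType) (m : nat) (j : 'I_m) : Cl R m := blade R (finset.set1 j).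

Definition clexp (R : nzRingType) (m : nat) (a : Cl R m) (n : nat) : Cl R m :=
  iter n (clmul a) (cl1 R m).

Definition clvec (R : nzRingType) (m : nat) (x : 'rV[R]_m) : Cl R m :=
  \sum_(j < m) clscale (x 0 j) (clgen R j).

Definition unitv (R : realType) (n : nat) (i : 'I_n) : 'rV[R]_n :=
  \row_(j < n) (i == j)%:R.

Definition clpartial (R : realType) (n m : nat) (i : 'I_n)
  (F : 'rV[R]_n -> Cl R m) (x : 'rV[R]_n) : Cl R m :=
  [ffun A => 'D_(unitv R i) (fun y => F y A) x].

Definition cl_C1 (R : realType) (n m : nat) (F : 'rV[R]_n -> Cl R m) : Prop :=
  forall (A : {set 'I_m}) (i : 'I_n),
    (forall x, derivable (fun y => F y A) x (unitv R i)) /\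
    continuous (fun x => 'D_(unitv R i) (fun y => F y A) x).

Definition dirac (R : realType) (m : nat) (F : 'rV[R]_m -> Cl R m)
  (x : 'rV[R]_m) : Cl R m :=
  \sum_(j < m) clmul (clgen R j) (clpartial j F x).

Definition x0 (R : nzRingType) (m : nat) (x : 'rV[R]_(m.+1)) : R := x 0 ord0.
Definition xvec (R : nzRingType) (m : nat) (x : 'rV[R]_(m.+1)) : 'rV[R]_m :=
  \row_(j < m) x 0 (lift ord0 j).

Definition cauchy_riemann (R : realType) (m : nat) (F : 'rV[R]_(m.+1) -> Cl R m)
  (x : 'rV[R]_(m.+1)) : Cl R m :=
  clpartial ord0 F x + \sum_(j < m) clmul (clgen R j) (clpartial (lift ord0 j) F x).

Definition cauchy_riemann_conj (R : realType) (m : nat) (F : 'rV[R]_(m.+1) -> Cl R m)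
  (x : 'rV[R]_(m.+1)) : Cl R m :=
  clpartial ord0 F x - \sum_(j < m) clmul (clgen R j) (clpartial (lift ord0 j) F x).

Definition monogenic_Rm (R : realType) (m : nat) (F : 'rV[R]_m -> Cl R m) : Prop :=
  cl_C1 F /\ forall x, dirac F x = 0.

Definition monogenic_Rm1 (R : realType) (m : nat) (F : 'rV[R]_(m.+1) -> Cl R m) : Prop :=
  cl_C1 F /\ forall x, cauchy_riemann F x = 0.

Definition monomial (R : nzRingType) (n : nat) (a : 'I_n -> nat) (x : 'rV[R]_n) : R :=
  \prod_(i < n) x 0 i ^+ a i.

Definition cl_poly (R : nzRingType) (n m : nat) (F : 'rV[R]_n -> Cl R m) : Prop :=
  exists s : seq (Cl R m * ('I_n -> nat)),
    forall x, F x = \sum_(p <- s) clscale (monomial p.2 x) p.1.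

Definition cl_homog_poly (R : nzRingType) (n m k : nat) (F : 'rV[R]_n -> Cl R m) : Prop :=
  exists s : seq (Cl R m * ('I_n -> nat)),
    all (fun p : Cl R m * ('I_n -> nat) => (\sum_(i < n) p.2 i)%N == k) s /\
    forall x, F x = \sum_(p <- s) clscale (monomial p.2 x) p.1.

Definition beta (R : nzRingType) (m k n : nat) : R :=
  if n == 0%N then 1
  else if odd n then (2 * k + m + n - 1)%:R else n%:R.

Definition Ccoef (R : fieldType) (m k n j : nat) : R :=
  (n - j)`!%:R / \prod_(s < (n - j).+1) beta R m k s.

Definition appellM (R : realType) (m k : nat) (P : 'rV[R]_m -> Cl R m) (n : nat)
  (x : 'rV[R]_(m.+1)) : Cl R m :=
  clmul (\sum_(j < n.+1)
           clscale ('C(n, j)%:R * Ccoef R m k n j * x0 x ^+ j) (clexp (clvec (xvec x)) (n - j)))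
        (P (xvec x)).

(* Main.v *)
Require Import Defs.
From HB Require Import structures.
From mathcomp Require Import all_boot all_order all_algebra.
From mathcomp Require Import all_classical all_reals all_analysis.
From mathcomp Require Import ring lra zify.
Import Order.TTheory GRing.Theory Num.Theory.
Import numFieldNormedType.Exports.
Local Open Scope ring_scope.
Set Implicit Arguments. Unset Strict Implicit. Unset Printing Implicit Defensive.

Section PolyF.
Variables (R : realType) (n : nat).
Local Notation V := 'rV[R]_n.

Inductive polyf : (V -> R) -> Prop :=
| PFc (c : R) : polyf (fun _ => c)
| PFx (i : 'I_n) : polyf (fun x => x 0 i)
| PFadd f g : polyf f -> polyf g -> polyf (fun x => f x + g x)
| PFmul f g : polyf f -> polyf g -> polyf (fun x => f x * g x).

Lemma polyf_ext f g : polyf f -> (forall x, f x = g x) -> polyf g.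
Proof. by move=> Hf E; have <- : f = g by apply: funext. Qed.

Lemma polyf_diff f : polyf f -> forall a, differentiable f a.
Proof.
elim => [c|i|f1 g1 _ Hf _ Hg|f1 g1 _ Hf _ Hg] a.
- exact: differentiable_cst.
- exact: differentiable_coord.
- exact: differentiableD.
- exact: differentiableM.
Qed.

Lemma polyf_derivable f a v : polyf f -> derivable f a v.
Proof. by move=> Hf; apply: diff_derivable; apply: polyf_diff. Qed.

Lemma polyf_cont f : polyf f -> continuous f.
Proof. by move=> Hf a; apply: differentiable_continuous; apply: polyf_diff. Qed.

Lemma derive_coord (i : 'I_n) a v : 'D_v (fun x : V => x 0 i) a = v 0 i.
Proof.
have @f : {linear V -> R}.
  by exists (fun N : V => N 0 i); do 2![eexists]; do ?[constructor];
     rewrite ?mxE// => ? *; rewrite ?mxE//; move=> ?; rewrite !mxE.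
rewrite deriveE; last exact: differentiable_coord.
rewrite (_ : (fun _ => _) = f) // diff_lin //; apply: coord_continuous.
Qed.

Lemma polyf_derive f v : polyf f -> polyf (fun a => 'D_v f a).
Proof.
elim => [c|i|f1 g1 Pf Hf Pg Hg|f1 g1 Pf Hf Pg Hg].
- by apply: (polyf_ext (PFc 0)) => x; rewrite derive_cst.
- by apply: (polyf_ext (PFc (v 0 i))) => x; rewrite derive_coord.
- apply: (polyf_ext (PFadd Hf Hg)) => x.
  by rewrite (deriveD (polyf_derivable Pf) (polyf_derivable Pg)).
- apply: (polyf_ext (PFadd (PFmul Pf Hg) (PFmul Pg Hf))) => x.
  by rewrite (deriveM (polyf_derivable Pf) (polyf_derivable Pg)).
Qed.
End PolyF.
Section PolyF2.
Variables (R : realType) (n : nat).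
Local Notation V := 'rV[R]_n.
Implicit Types f g : V -> R.

Lemma PFsum (I : Type) (r : seq I) (F : I -> V -> R) :
  (forall i, polyf (F i)) -> polyf (fun x => \sum_(i <- r) F i x).
Proof.
move=> H; elim: r => [|i r IH].
  by apply: (polyf_ext (@PFc R n 0)) => x; rewrite big_nil.
by apply: (polyf_ext (PFadd (H i) IH)) => x; rewrite big_cons.
Qed.

Lemma PFprod (I : Type) (r : seq I) (F : I -> V -> R) :
  (forall i, polyf (F i)) -> polyf (fun x => \prod_(i <- r) F i x).
Proof.
move=> H; elim: r => [|i r IH].
  by apply: (polyf_ext (@PFc R n 1)) => x; rewrite big_nil.
by apply: (polyf_ext (PFmul (H i) IH)) => x; rewrite big_cons.
Qed.

Lemma PFexp f k : polyf f -> polyf (fun x => f x ^+ k).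
Proof.
move=> H; elim: k => [|k IH].
  by apply: (polyf_ext (@PFc R n 1)) => x; rewrite expr0.
by apply: (polyf_ext (PFmul H IH)) => x; rewrite exprS.
Qed.

Lemma PFmonomial (a : 'I_n -> nat) : polyf (@monomial R n a).
Proof. by apply: PFprod => i; apply: PFexp; apply: PFx. Qed.

Lemma PFscale (c : R) f : polyf f -> polyf (fun x => c * f x).
Proof. by move=> H; apply: (PFmul (@PFc R n c) H). Qed.

Lemma derive_sumseq (I : Type) (r : seq I) (F : I -> V -> R) a v :
  (forall i, polyf (F i)) ->
  'D_v (fun x => \sum_(i <- r) F i x) a = \sum_(i <- r) 'D_v (F i) a.
Proof.
move=> H; elim: r => [|i r IH].
  rewrite big_nil; under eq_fun do rewrite big_nil; exact: derive_cst.
rewrite big_cons; under eq_fun do rewrite big_cons.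
rewrite (deriveD (polyf_derivable (H i)) (polyf_derivable (PFsum r H))).
by rewrite IH.
Qed.

Lemma derive_scale (c : R) f a v : polyf f ->
  'D_v (fun x => c * f x) a = c * 'D_v f a.
Proof.
move=> H; rewrite (deriveM (polyf_derivable (@PFc R n c)) (polyf_derivable H)).
by rewrite derive_cst /= scaler0 addr0.
Qed.

Lemma derive_mul f g a v : polyf f -> polyf g ->
  'D_v (fun x => f x * g x) a = 'D_v f a * g a + f a * 'D_v g a.
Proof.
move=> Hf Hg; rewrite (deriveM (polyf_derivable Hf) (polyf_derivable Hg)) /=.
by rewrite addrC mulrC.
Qed.

Lemma derive_add f g a v : polyf f -> polyf g ->
  'D_v (fun x => f x + g x) a = 'D_v f a + 'D_v g a.
Proof. by move=> Hf Hg; rewrite (deriveD (polyf_derivable Hf) (polyf_derivable Hg)). Qed.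

Lemma derive_exp f k a v : polyf f ->
  'D_v (fun x => f x ^+ k) a = k%:R * f a ^+ k.-1 * 'D_v f a.
Proof.
move=> Hf; have -> : (fun x => f x ^+ k) = f ^+ k by apply: funext => x; rewrite exprfctE.
by rewrite (deriveX _ (polyf_derivable Hf)).
Qed.
End PolyF2.
Section Cliff.
Variables (R : comNzRingType) (m : nat).
Implicit Types (a b c : Cl R m) (A B C D : {set 'I_m}).

Definition sd A B : {set 'I_m} := (A :\: B) :|: (B :\: A).
Lemma in_sd A B x : (x \in sd A B) = (x \in A) (+) (x \in B).
Proof. by rewrite !inE; case: (x \in A); case: (x \in B). Qed.
Lemma sdK A B : sd A (sd A B) = B.
Proof. by apply/setP => x; rewrite !in_sd; case: (x \in A); case: (x \in B). Qed.
Lemma sdC A B : sd A B = sd B A.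
Proof. by apply/setP => x; rewrite !in_sd; case: (x \in A); case: (x \in B). Qed.
Lemma sd0 A : sd finset.set0 A = A.
Proof. by apply/setP => x; rewrite !in_sd inE. Qed.
Lemma sdv A : sd A A = finset.set0.
Proof. by apply/setP => x; rewrite !in_sd inE; case: (x \in A). Qed.

Definition sgb (b : bool) : R := (-1) ^+ b.
Lemma sgbM (u v : bool) : sgb u * sgb v = sgb (u (+) v).
Proof. by case: u; case: v; rewrite /sgb /= ?(expr0, expr1, mulr1, mul1r, mulrNN). Qed.
Lemma sgb_card (T : finType) (S : {set T}) : (-1) ^+ #|S| = \prod_x sgb (x \in S) :> R.
Proof.
rewrite -prodr_const big_mkcond /=; apply: eq_bigr => x _.
by case: (x \in S); rewrite /sgb ?expr0 ?expr1.
Qed.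

Definition Pp A B : R := \prod_(p : 'I_m * 'I_m) sgb [&& p.1 \in A, p.2 \in B & (p.2 < p.1)%N].
Definition Pi A B : R := \prod_(i : 'I_m) sgb ((i \in A) && (i \in B)).
Lemma blade_signE A B : blade_sign R A B = Pp A B * Pi A B.
Proof.
rewrite /blade_sign exprD !sgb_card /Pp /Pi; congr (_ * _); apply: eq_bigr => p _; rewrite !inE //.
by rewrite andbA.
Qed.

Lemma cocycle A B C :
  blade_sign R A B * blade_sign R (sd A B) C = blade_sign R A (sd B C) * blade_sign R B C.
Proof.
rewrite !blade_signE mulrACA [RHS]mulrACA; congr (_ * _).
  rewrite /Pp -!big_split; apply: eq_bigr => p _ /=; rewrite !sgbM; congr sgb.
  rewrite !in_sd; case: (p.1 \in A); case: (p.1 \in B); case: (p.2 \in B); case: (p.2 \in C);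
   case: (p.2 < p.1)%N => //.
rewrite /Pi -!big_split; apply: eq_bigr => p _ /=; rewrite !sgbM; congr sgb.
by rewrite !in_sd; case: (p \in A); case: (p \in B); case: (p \in C).
Qed.

Lemma clmulE a b D :
  clmul a b D = \sum_A a A * b (sd A D) * blade_sign R A (sd A D).
Proof.
rewrite /clmul sum_ffunE; apply: eq_bigr => A _; rewrite sum_ffunE.
rewrite (bigD1 (sd A D)) //= big1 ?addr0.
  by rewrite !ffunE -/(sd A (sd A D)) sdK eqxx mulr1.
move=> B HB; rewrite !ffunE -/(sd A B).
case: eqP => [E|]; last by rewrite mulr0.
by move: HB; rewrite E sdK eqxx.
Qed.

Lemma clmulA a b c : clmul (clmul a b) c = clmul a (clmul b c).
Proof.
apply/ffunP => D; rewrite !clmulE.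
under eq_bigr do rewrite clmulE !mulr_suml.
rewrite exchange_big /=; apply: eq_bigr => A _.
rewrite clmulE mulr_sumr mulr_suml [RHS](reindex_inj (inv_inj (sdK A))) /=.
apply: eq_bigr => X _.
have E1 : sd (sd A X) (sd A D) = sd X D.
  by apply/setP => x; rewrite !in_sd; case: (x \in A); case: (x \in X); case: (x \in D).
rewrite E1.
have := cocycle A (sd A X) (sd X D); rewrite sdK.
have -> : sd (sd A X) (sd X D) = sd A D.
  by apply/setP => x; rewrite !in_sd; case: (x \in A); case: (x \in X); case: (x \in D).
move=> Hc.
transitivity (a A * b (sd A X) * c (sd X D) * (blade_sign R A (sd A X) * blade_sign R X (sd X D))).
  by ring.
by rewrite Hc; ring.
Qed.
End Cliff.
Section Cliff2.
Variables (R : comNzRingType) (m : nat).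
Implicit Types (a b c : Cl R m) (A B C D : {set 'I_m}).

Lemma clscaleE k a A : clscale k a A = k * a A. Proof. by rewrite ffunE. Qed.
Lemma clscale1 a : clscale 1 a = a. Proof. by apply/ffunP => A; rewrite ffunE mul1r. Qed.
Lemma clscale0 a : clscale 0 a = 0. Proof. by apply/ffunP => A; rewrite !ffunE mul0r. Qed.
Lemma clscaler0 k : clscale k (0 : Cl R m) = 0. Proof. by apply/ffunP => A; rewrite !ffunE mulr0. Qed.
Lemma clscaleA k l a : clscale k (clscale l a) = clscale (k * l) a.
Proof. by apply/ffunP => A; rewrite !ffunE mulrA. Qed.
Lemma clscaleDr k a b : clscale k (a + b) = clscale k a + clscale k b.
Proof. by apply/ffunP => A; rewrite !ffunE mulrDr. Qed.
Lemma clscaleDl k l a : clscale (k + l) a = clscale k a + clscale l a.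
Proof. by apply/ffunP => A; rewrite !ffunE mulrDl. Qed.
Lemma clscaleN k a : clscale (- k) a = - clscale k a.
Proof. by apply/ffunP => A; rewrite !ffunE mulNr. Qed.
Lemma clscaleNr k a : clscale k (- a) = - clscale k a.
Proof. by apply/ffunP => A; rewrite !ffunE mulrN. Qed.
Lemma clscale_sumr (I : Type) (r : seq I) (F : I -> Cl R m) k :
  clscale k (\sum_(i <- r) F i) = \sum_(i <- r) clscale k (F i).
Proof. by elim/big_rec2: _ => [|i x y _ <-]; rewrite ?clscaler0 ?clscaleDr. Qed.
Lemma clscale_suml (I : Type) (r : seq I) (F : I -> R) a :
  clscale (\sum_(i <- r) F i) a = \sum_(i <- r) clscale (F i) a.
Proof. by elim/big_rec2: _ => [|i x y _ <-]; rewrite ?clscale0 ?clscaleDl. Qed.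

Lemma clmulDl a b c : clmul (a + b) c = clmul a c + clmul b c.
Proof.
apply/ffunP => D; rewrite ffunE !clmulE -big_split; apply: eq_bigr => A _.
by rewrite ffunE !mulrDl.
Qed.
Lemma clmulDr a b c : clmul a (b + c) = clmul a b + clmul a c.
Proof.
apply/ffunP => D; rewrite ffunE !clmulE -big_split; apply: eq_bigr => A _.
by rewrite ffunE !mulrDr !mulrDl.
Qed.
Lemma clmul0l b : clmul 0 b = 0.
Proof. by apply/ffunP => D; rewrite clmulE ffunE big1 // => A _; rewrite ffunE !mul0r. Qed.
Lemma clmul0r b : clmul b 0 = 0.
Proof. by apply/ffunP => D; rewrite clmulE ffunE big1 // => A _; rewrite ffunE mulr0 mul0r. Qed.
Lemma clmulZl k a b : clmul (clscale k a) b = clscale k (clmul a b).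
Proof.
apply/ffunP => D; rewrite ffunE !clmulE mulr_sumr; apply: eq_bigr => A _.
by rewrite ffunE !mulrA.
Qed.
Lemma clmulZr k a b : clmul a (clscale k b) = clscale k (clmul a b).
Proof.
apply/ffunP => D; rewrite ffunE !clmulE mulr_sumr; apply: eq_bigr => A _.
by rewrite ffunE; ring.
Qed.
Lemma clmul_suml (I : Type) (r : seq I) (F : I -> Cl R m) b :
  clmul (\sum_(i <- r) F i) b = \sum_(i <- r) clmul (F i) b.
Proof. by elim/big_rec2: _ => [|i x y _ <-]; rewrite ?clmul0l ?clmulDl. Qed.
Lemma clmul_sumr (I : Type) (r : seq I) (F : I -> Cl R m) b :
  clmul b (\sum_(i <- r) F i) = \sum_(i <- r) clmul b (F i).
Proof. by elim/big_rec2: _ => [|i x y _ <-]; rewrite ?clmul0r ?clmulDr. Qed.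

Lemma sign0l B : blade_sign R finset.set0 B = 1.
Proof.
rewrite blade_signE /Pp /Pi !big1 ?mulr1 // => p _; rewrite inE //.
Qed.
Lemma sign0r B : blade_sign R B finset.set0 = 1.
Proof.
rewrite blade_signE /Pp /Pi !big1 ?mulr1 // => p _; rewrite inE ?andbF //.
Qed.

Lemma clmul1l a : clmul (cl1 R m) a = a.
Proof.
apply/ffunP => D; rewrite clmulE (bigD1 finset.set0) //= big1 ?addr0.
  by rewrite ffunE eqxx sd0 sign0l !mulr1 mul1r.
by move=> A /negbTE HA; rewrite ffunE HA !mul0r.
Qed.
Lemma clmul1r a : clmul a (cl1 R m) = a.
Proof.
apply/ffunP => D; rewrite clmulE (bigD1 D) //= big1 ?addr0.
  by rewrite ffunE sdv eqxx sign0r !mulr1.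
move=> A HA; rewrite ffunE.
case: eqP => [E|]; last by rewrite mulr0 mul0r.
by move: HA; rewrite -(sdK A D) E sdC sd0 eqxx.
Qed.

Lemma clmul_blade A B :
  clmul (blade R A) (blade R B) = clscale (blade_sign R A B) (blade R (sd A B)).
Proof.
apply/ffunP => D; rewrite clmulE ffunE (bigD1 A) //= big1 ?addr0.
  rewrite !ffunE eqxx mul1r.
  case: (eqVneq (sd A D) B) => [<-|H]; first by rewrite sdK eqxx mulr1 mul1r.
  rewrite mul0r; case: eqP => [E|]; last by rewrite mulr0.
  by move: H; rewrite E sdK eqxx.
by move=> X /negbTE HX; rewrite ffunE HX !mul0r.
Qed.
End Cliff2.
Section Cliff3.
Variables (R : comNzRingType) (m : nat).
Implicit Types (a b c : Cl R m) (A B C D : {set 'I_m}).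

Lemma sign11 (i j : 'I_m) :
  blade_sign R [set i] [set j] = sgb R (j < i)%N * sgb R (i == j).
Proof.
rewrite blade_signE /Pp /Pi (bigD1 (i, j)) //= big1 ?mulr1.
  rewrite (bigD1 i) //= big1 ?mulr1 ?inE ?eqxx //.
  by move=> l /negbTE Hl; rewrite !inE Hl.
move=> [p q] /= H; rewrite !inE.
case: (eqVneq p i) H => [-> H|]; last by rewrite /sgb expr0.
case: (eqVneq q j) H => [-> H|]; last by rewrite /sgb expr0.
by rewrite eqxx in H.
Qed.

Lemma clgen_sq (i : 'I_m) : clmul (clgen R i) (clgen R i) = clscale (-1) (cl1 R m).
Proof.
rewrite /clgen clmul_blade sign11 ltnn eqxx /sgb expr0 expr1 mul1r /cl1.
by rewrite sdv.
Qed.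

Lemma clgen_anti (i j : 'I_m) : i != j ->
  clmul (clgen R i) (clgen R j) + clmul (clgen R j) (clgen R i) = 0.
Proof.
move=> Hij; rewrite /clgen !clmul_blade !sign11 sdC (negbTE Hij) eq_sym (negbTE Hij) /sgb expr0 !mulr1.
rewrite -clscaleDl.
case: (ltngtP i j) => H; first by rewrite expr0 expr1 addrN clscale0.
  by rewrite expr0 expr1 addNr clscale0.
by move/val_inj: H => E; rewrite E eqxx in Hij.
Qed.

Lemma clgen_vec (j : 'I_m) (y : 'rV[R]_m) :
  clmul (clgen R j) (clvec y) + clmul (clvec y) (clgen R j) = clscale (- (y 0 j *+ 2)) (cl1 R m).
Proof.
rewrite /clvec clmul_sumr clmul_suml -big_split /= (bigD1 j) //= big1 ?addr0.
  rewrite clmulZr clmulZl clgen_sq -clscaleDr -clscaleDl clscaleA; congr clscale; by rewrite mulrBr mulrN1 mulr1 -opprD -mulr2n.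
move=> i Hij; rewrite clmulZr clmulZl -clscaleDr addrC clgen_anti ?clscaler0 //.
Qed.

Lemma clgen_vec_mul (j : 'I_m) (y : 'rV[R]_m) g :
  clmul (clgen R j) (clmul (clvec y) g) =
  - clmul (clvec y) (clmul (clgen R j) g) + clscale (- (y 0 j *+ 2)) g.
Proof.
rewrite -clmulA -[in RHS]clmulA.
have := clgen_vec j y => /(congr1 (fun z => clmul z g)).
rewrite clmulDl clmulZl clmul1l => <-.
by rewrite addrC -addrA addrN addr0.
Qed.
End Cliff3.
Section ClFun.
Variables (R : realType) (n m : nat).
Local Notation V := 'rV[R]_n.
Implicit Types (F G : V -> Cl R m) (f g : V -> R) (c : Cl R m).

Definition clP F := forall A, polyf (fun x => F x A).

Lemma clpartialE i F x A : clpartial i F x A = 'D_(unitv R i) (fun y => F y A) x.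
Proof. by rewrite ffunE. Qed.

Lemma clP_C1 F : clP F -> cl_C1 F.
Proof.
move=> H A i; split => [x|]; first exact: polyf_derivable.
exact/polyf_cont/polyf_derive.
Qed.

Lemma clP_partial i F : clP F -> clP (clpartial i F).
Proof.
move=> H A; apply: (polyf_ext (polyf_derive (unitv R i) (H A))) => x.
by rewrite clpartialE.
Qed.

Lemma clP_const c : clP (fun _ => c).
Proof. by move=> A; apply: PFc. Qed.

Lemma clP_add F G : clP F -> clP G -> clP (fun x => F x + G x).
Proof. by move=> HF HG A; apply: (polyf_ext (PFadd (HF A) (HG A))) => x; rewrite ffunE. Qed.

Lemma clP_sum (I : Type) (r : seq I) (F : I -> V -> Cl R m) :
  (forall i, clP (F i)) -> clP (fun x => \sum_(i <- r) F i x).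
Proof.
move=> H A; apply: (polyf_ext (PFsum r (fun i => H i A))) => x.
by rewrite sum_ffunE.
Qed.

Lemma clP_scale f F : polyf f -> clP F -> clP (fun x => clscale (f x) (F x)).
Proof. by move=> Hf HF A; apply: (polyf_ext (PFmul Hf (HF A))) => x; rewrite ffunE. Qed.

Lemma clP_mul F G : clP F -> clP G -> clP (fun x => clmul (F x) (G x)).
Proof.
move=> HF HG D.
apply: (polyf_ext (PFsum (index_enum _)
   (fun A => PFmul (PFmul (HF A) (HG (sd A D))) (@PFc R n (blade_sign R A (sd A D)))))).
by move=> x; rewrite clmulE.
Qed.

Lemma clpartial_const i c x : clpartial i (fun _ : V => c) x = 0.
Proof. by apply/ffunP => A; rewrite clpartialE ffunE derive_cst. Qed.

Lemma clpartial_add i F G x : clP F -> clP G ->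
  clpartial i (fun x => F x + G x) x = clpartial i F x + clpartial i G x.
Proof.
move=> HF HG; apply/ffunP => A; rewrite clpartialE !ffunE.
under eq_fun do rewrite ffunE.
by rewrite derive_add.
Qed.

Lemma clpartial_sum i (I : Type) (r : seq I) (F : I -> V -> Cl R m) x :
  (forall i, clP (F i)) ->
  clpartial i (fun x => \sum_(j <- r) F j x) x = \sum_(j <- r) clpartial i (F j) x.
Proof.
move=> H; apply/ffunP => A; rewrite clpartialE sum_ffunE.
under eq_fun do rewrite sum_ffunE.
rewrite derive_sumseq; last by move=> j; apply: H.
by apply: eq_bigr => j _; rewrite clpartialE.
Qed.

Lemma clpartial_scale i f F x : polyf f -> clP F ->
  clpartial i (fun x => clscale (f x) (F x)) x =
  clscale ('D_(unitv R i) f x) (F x) + clscale (f x) (clpartial i F x).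
Proof.
move=> Hf HF; apply/ffunP => A; rewrite clpartialE !ffunE.
under eq_fun do rewrite ffunE.
by rewrite derive_mul.
Qed.

Lemma clpartial_mul i F G x : clP F -> clP G ->
  clpartial i (fun x => clmul (F x) (G x)) x =
  clmul (clpartial i F x) (G x) + clmul (F x) (clpartial i G x).
Proof.
move=> HF HG; apply/ffunP => D; rewrite clpartialE ffunE !clmulE.
under eq_fun do rewrite clmulE.
rewrite derive_sumseq; last first.
  by move=> A; apply: PFmul; [apply: PFmul|apply: PFc].
rewrite -big_split; apply: eq_bigr => A _ /=.
rewrite derive_mul; [|by apply: PFmul|by apply: PFc].
rewrite derive_cst mulr0 addr0 derive_mul // !clpartialE; ring.
Qed.
End ClFun.
Section Euler.
Variables (R : realType) (n : nat).
Local Notation V := 'rV[R]_n.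
Implicit Types (f g : V -> R).

Definition eulerR f (y : V) : R := \sum_(i < n) y 0 i * 'D_(unitv R i) f y.

Lemma eulerR_mul f g y : polyf f -> polyf g ->
  eulerR (fun x => f x * g x) y = eulerR f y * g y + f y * eulerR g y.
Proof.
move=> Hf Hg; rewrite /eulerR mulr_suml mulr_sumr -big_split; apply: eq_bigr => i _ /=.
rewrite derive_mul //; ring.
Qed.

Lemma unitvE (i j : 'I_n) : unitv R i 0 j = (i == j)%:R.
Proof. by rewrite mxE. Qed.

Lemma eulerR_exp (l : 'I_n) p y :
  eulerR (fun x => x 0 l ^+ p) y = p%:R * y 0 l ^+ p.
Proof.
rewrite /eulerR (bigD1 l) //= big1 ?addr0.
  rewrite derive_exp; last exact: PFx.
  rewrite derive_coord unitvE eqxx mulr1.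
  case: p => [|p]; first by rewrite /= !expr0; ring.
  by rewrite /= exprS; ring.
move=> i Hi; rewrite derive_exp; last exact: PFx.
by rewrite derive_coord unitvE (negbTE Hi) !mulr0.
Qed.

Lemma eulerR_prod (I : Type) (r : seq I) (g : I -> V -> R) (d : I -> R) y :
  (forall i, polyf (g i)) -> (forall i x, eulerR (g i) x = d i * g i x) ->
  eulerR (fun x => \prod_(i <- r) g i x) y = (\sum_(i <- r) d i) * \prod_(i <- r) g i y.
Proof.
move=> Hg Hd; elim: r y => [|i r IH] y.
  rewrite !big_nil mul0r /eulerR big1 // => j _.
  under eq_fun do rewrite big_nil.
  by rewrite derive_cst mulr0.
have -> : (fun x => \prod_(j <- i :: r) g j x) = (fun x => g i x * \prod_(j <- r) g j x).
  by apply: funext => x; rewrite big_cons.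
rewrite eulerR_mul //; last exact: PFprod.
by rewrite IH Hd !big_cons; ring.
Qed.


Lemma eulerR_monomial (a : 'I_n -> nat) y :
  eulerR (@monomial R n a) y = (\sum_(i < n) a i)%:R * monomial a y.
Proof.
rewrite /monomial (@eulerR_prod _ _ _ (fun i => (a i)%:R)).
- by rewrite natr_sum.
- by move=> i; apply: PFexp; apply: PFx.
- by move=> i x; rewrite eulerR_exp.
Qed.

Lemma eulerR_sum (I : Type) (r : seq I) (F : I -> V -> R) y :
  (forall i, polyf (F i)) ->
  eulerR (fun x => \sum_(i <- r) F i x) y = \sum_(i <- r) eulerR (F i) y.
Proof.
move=> H; rewrite /eulerR exchange_big /=; apply: eq_bigr => i _.
by rewrite derive_sumseq // mulr_sumr.
Qed.

Lemma eulerR_scale (c : R) f y : polyf f -> eulerR (fun x => c * f x) y = c * eulerR f y.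
Proof.
move=> H; rewrite /eulerR mulr_sumr; apply: eq_bigr => i _.
by rewrite derive_scale //; ring.
Qed.
End Euler.
Section Rm.
Variables (R : realType) (m : nat).
Local Notation V := 'rV[R]_m.
Implicit Types (F G : V -> Cl R m).

Definition euler F (y : V) : Cl R m := \sum_(i < m) clscale (y 0 i) (clpartial i F y).

Lemma eulerE F y A : euler F y A = eulerR (fun x => F x A) y.
Proof.
rewrite /euler sum_ffunE /eulerR; apply: eq_bigr => i _.
by rewrite clscaleE clpartialE.
Qed.

Lemma clP_vec : clP (fun y : V => clvec y).
Proof.
apply: clP_sum => j; apply: clP_scale; [exact: PFx | exact: clP_const].
Qed.

Lemma clpartial_vec i (y : V) : clpartial i (fun y : V => clvec y) y = clgen R i.
Proof.
rewrite /clvec clpartial_sum; last first.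
  by move=> j; apply: clP_scale; [exact: PFx | exact: clP_const].
rewrite (bigD1 i) //= big1 ?addr0.
  by rewrite clpartial_scale ?clpartial_const ?clscaler0 ?addr0 ?derive_coord ?unitvE ?eqxx
    ?clscale1 //; [exact: PFx | exact: clP_const].
move=> j Hj; rewrite clpartial_scale ?clpartial_const ?clscaler0 ?addr0 ?derive_coord ?unitvE;
  [|exact: PFx | exact: clP_const].
by rewrite eq_sym (negbTE Hj) clscale0.
Qed.

Lemma clP_exp l : clP (fun y : V => clexp (clvec y) l).
Proof.
elim: l => [|l IH]; first exact: clP_const.
exact: (clP_mul clP_vec IH).
Qed.

Lemma euler_add F G y : clP F -> clP G ->
  euler (fun x => F x + G x) y = euler F y + euler G y.
Proof.
move=> HF HG; rewrite /euler -big_split; apply: eq_bigr => i _ /=.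
by rewrite clpartial_add // clscaleDr.
Qed.

Lemma euler_mul F G y : clP F -> clP G ->
  euler (fun x => clmul (F x) (G x)) y = clmul (euler F y) (G y) + clmul (F y) (euler G y).
Proof.
move=> HF HG; rewrite /euler clmul_suml clmul_sumr -big_split; apply: eq_bigr => i _ /=.
by rewrite clpartial_mul // clscaleDr clmulZl clmulZr.
Qed.

Lemma euler_vec y : euler (fun y : V => clvec y) y = clvec y.
Proof. by rewrite /euler; apply: eq_bigr => i _; rewrite clpartial_vec. Qed.

Lemma euler_homog k (P : V -> Cl R m) : cl_homog_poly k P ->
  clP P /\ forall y, euler P y = clscale k%:R (P y).
Proof.
case=> s [Hall HP].
have -> : P = fun x => \sum_(p <- s) clscale (monomial p.2 x) p.1 by apply: funext.
have Hp : forall A, (forall p : Cl R m * ('I_m -> nat),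
     polyf (fun x => p.1 A * monomial p.2 x)).
  by move=> A p; apply: PFscale; apply: PFmonomial.
split.
  move=> A; apply: (polyf_ext (PFsum s (Hp A))) => x.
  by rewrite sum_ffunE; apply: eq_bigr => p _; rewrite ffunE mulrC.
move=> y; apply/ffunP => A; rewrite eulerE ffunE !sum_ffunE.
have -> : (fun x => (\sum_(p <- s) clscale (monomial p.2 x) p.1) A) =
   (fun x => \sum_(p <- s) p.1 A * monomial p.2 x).
  by apply: funext => x; rewrite sum_ffunE; apply: eq_bigr => p _; rewrite ffunE mulrC.
rewrite eulerR_sum // mulr_sumr !big_seq; apply: eq_bigr => p Hps.
rewrite eulerR_scale ?eulerR_monomial ?ffunE; last exact: PFmonomial.
by move/allP: Hall => /(_ p Hps) /eqP ->; ring.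
Qed.
End Rm.
Definition Bn (m k l : nat) : nat :=
  if l == 0%N then 0%N else if odd l then (2 * k + m + l - 1)%N else l.

Lemma Bn_rec m k l : (Bn m k l.+1 + Bn m k l = m + 2 * l + 2 * k)%N.
Proof.
rewrite /Bn /=; case: l => [|l] /=; first by lia.
by case: (odd l) => /=; lia.
Qed.

Section Rm2.
Variables (R : realType) (m k : nat) (P : 'rV[R]_m -> Cl R m).
Local Notation V := 'rV[R]_m.

Definition Gf l := fun y : V => clmul (clexp (clvec y) l) (P y).

Lemma GfS l y : Gf l.+1 y = clmul (clvec y) (Gf l y).
Proof. by rewrite /Gf /clexp /= clmulA. Qed.
Lemma Gf0 y : Gf 0 y = P y.
Proof. by rewrite /Gf /clexp /= clmul1l. Qed.
Lemma GfS_fun l : Gf l.+1 = fun y => clmul (clvec y) (Gf l y).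
Proof. by apply: funext => y; rewrite GfS. Qed.
Lemma Gf0_fun : Gf 0 = P.
Proof. by apply: funext => y; rewrite Gf0. Qed.

Lemma clP_G l : clP P -> clP (Gf l).
Proof. by move=> HP; apply: clP_mul; [exact: clP_exp | exact: HP]. Qed.

Lemma euler_G l y : clP P -> (forall y, euler P y = clscale k%:R (P y)) ->
  euler (Gf l) y = clscale (l + k)%:R (Gf l y).
Proof.
move=> HP HE; elim: l y => [|l IH] y; first by rewrite Gf0_fun HE.
rewrite GfS_fun euler_mul ?euler_vec ?IH ?clmulZr; [| exact: clP_vec | exact: clP_G].
rewrite -{1}(clscale1 (clmul _ _)) -clscaleDl -GfS; congr clscale; by rewrite addSn -add1n !natrD.
Qed.

Lemma clmulV_G c l y :
  clmul (clvec y) (clscale (c * (Bn m k l)%:R) (Gf l.-1 y)) = clscale (c * (Bn m k l)%:R) (Gf l y).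
Proof.
case: l => [|l]; first by rewrite /Bn /= ?mulr0n ?mulr0 !clscale0 clmul0r.
by rewrite clmulZr -GfS.
Qed.

Lemma dirac_G l y : clP P -> (forall y, euler P y = clscale k%:R (P y)) ->
  (forall y, Defs.dirac P y = 0) ->
  Defs.dirac (Gf l) y = clscale (- 1 * (Bn m k l)%:R) (Gf l.-1 y).
Proof.
move=> HP HE HD; elim: l y => [|l IH] y.
  by rewrite Gf0_fun HD /Bn /= ?mulr0n ?mulr0 ?clscale0.
rewrite GfS_fun /Defs.dirac.
have Ej j : clpartial j (fun y0 => clmul (clvec y0) (Gf l y0)) y =
    clmul (clgen R j) (Gf l y) + clmul (clvec y) (clpartial j (Gf l) y).
  by rewrite clpartial_mul ?clpartial_vec //; [exact: clP_vec|exact: clP_G].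
under eq_bigr do rewrite Ej clmulDr -clmulA clgen_sq clmulZl clmul1l clgen_vec_mul.
rewrite !big_split /=.
rewrite -clscale_suml sumr_const card_ord sumrN -clmul_sumr.
have -> : \sum_(i<m) clmul (clgen R i) (clpartial i (Gf l) y) = Defs.dirac (Gf l) y by [].
have -> : \sum_(i < m) clscale (y 0 i *- 2) (clpartial i (Gf l) y) = clscale (- 2%:R) (euler (Gf l) y).
  rewrite /euler clscale_sumr; apply: eq_bigr => i _; rewrite clscaleA.
  by rewrite mulNr mulr_natl.
rewrite IH clmulV_G euler_G // clscaleA -clscaleN -!clscaleDl; congr clscale.
have H := congr1 (fun t : nat => t%:R : R) (Bn_rec m k l).
rewrite /= !natrD !addr0 in H.
rewrite !natrD mulNrn; lra.
Qed.
End Rm2.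
Section Rep.
Variables (R : realType) (n m : nat).
Local Notation V := 'rV[R]_n.

Lemma monomialD (a b : 'I_n -> nat) (x : V) :
  monomial (fun i => (a i + b i)%N) x = monomial a x * monomial b x.
Proof. by rewrite /monomial -big_split; apply: eq_bigr => i _; rewrite exprD. Qed.

Lemma polyf_rep f : polyf f ->
  exists s : seq (R * ('I_n -> nat)), forall x : V, f x = \sum_(p <- s) p.1 * monomial p.2 x.
Proof.
elim => [c|i|f1 g1 _ [s Hs] _ [t Ht]|f1 g1 _ [s Hs] _ [t Ht]].
- exists [:: (c, fun _ => 0%N)] => x; rewrite big_seq1 /= /monomial big1 ?mulr1 //.
- exists [:: (1, fun j => nat_of_bool (j == i))] => x; rewrite big_seq1 /= mul1r /monomial.
  rewrite (bigD1 i) //= eqxx expr1 big1 ?mulr1 // => j /negbTE ->; by rewrite expr0.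
- by exists (s ++ t) => x; rewrite big_cat /= Hs Ht.
- exists [seq (p.1 * q.1, fun i => (p.2 i + q.2 i)%N) | p <- s, q <- t] => x.
  rewrite big_allpairs_dep Hs Ht mulr_suml; apply: eq_bigr => p _.
  rewrite mulr_sumr; apply: eq_bigr => q _ /=; rewrite monomialD; ring.
Qed.

Lemma ffun_decomp (a : Cl R m) : a = \sum_A clscale (a A) (blade R A).
Proof.
apply/ffunP => D; rewrite sum_ffunE (bigD1 D) //= big1 ?addr0.
  by rewrite !ffunE eqxx mulr1.
by move=> A HA; rewrite !ffunE eq_sym (negbTE HA) mulr0.
Qed.

Lemma clP_poly (F : V -> Cl R m) : clP F -> cl_poly F.
Proof.
move=> HF.
suff [s Hs] : exists s : seq (Cl R m * ('I_n -> nat)), forall x,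
    \sum_(A <- index_enum _) clscale (F x A) (blade R A) = \sum_(p <- s) clscale (monomial p.2 x) p.1.
  by exists s => x; rewrite -Hs -ffun_decomp.
elim: (index_enum _) => [|A r [s Hs]]; first by exists [::] => x; rewrite !big_nil.
have [t Ht] := polyf_rep (HF A).
exists ([seq (clscale q.1 (blade R A), q.2) | q <- t] ++ s) => x.
rewrite big_cons big_cat /= Hs big_map Ht clscale_suml; congr (_ + _).
by apply: eq_bigr => q _; rewrite clscaleA mulrC.
Qed.
End Rep.
Section Comp.
Variables (R : realType) (m : nat).
Local Notation W := 'rV[R]_(m.+1).
Local Notation V := 'rV[R]_m.

Lemma xvecD (h : R) (v x : W) : xvec (h *: v + x) = h *: xvec v + xvec x.
Proof. by apply/rowP => j; rewrite !mxE. Qed.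

Lemma derive_xvec (g : V -> R) (x v : W) :
  'D_v (fun y => g (xvec y)) x = 'D_(xvec v) g (xvec x).
Proof.
rewrite /derive; f_equal; f_equal; apply: funext => h /=.
by rewrite xvecD.
Qed.

Lemma xvec_unit_lift (j : 'I_m) : xvec (unitv R (lift ord0 j)) = unitv R j.
Proof. by apply/rowP => i; rewrite !mxE (inj_eq lift_inj). Qed.

Lemma xvec_unit0 : xvec (unitv R (ord0 : 'I_m.+1)) = 0.
Proof. by apply/rowP => i; rewrite !mxE (negbTE (neq_lift _ _)). Qed.

Lemma polyf_xvec (g : V -> R) : polyf g -> polyf (fun x : W => g (xvec x)).
Proof.
elim => [c|i|f1 g1 _ H1 _ H2|f1 g1 _ H1 _ H2].
- exact: PFc.
- by apply: (polyf_ext (PFx _ (lift ord0 i))) => x; rewrite mxE.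
- exact: PFadd.
- exact: PFmul.
Qed.

Lemma clP_xvec (G : V -> Cl R m) : clP G -> clP (fun x : W => G (xvec x)).
Proof. by move=> H A; apply: (polyf_xvec (H A)). Qed.

Lemma clpartial_xvec_lift (G : V -> Cl R m) j (x : W) :
  clpartial (lift ord0 j) (fun x : W => G (xvec x)) x = clpartial j G (xvec x).
Proof. by apply/ffunP => A; rewrite !clpartialE (derive_xvec (fun z => G z A)) xvec_unit_lift. Qed.

Lemma clpartial_xvec_0 (G : V -> Cl R m) (x : W) :
  clpartial ord0 (fun x : W => G (xvec x)) x = 0.
Proof. by apply/ffunP => A; rewrite !clpartialE (derive_xvec (fun z => G z A)) xvec_unit0 derive0 ffunE. Qed.

Lemma polyf_x0 (c : R) j : polyf (fun x : W => c * x0 x ^+ j).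
Proof. by apply: PFscale; apply: PFexp; apply: PFx. Qed.

Lemma derive_x0_0 (c : R) j (x : W) :
  'D_(unitv R ord0) (fun x : W => c * x0 x ^+ j) x = c * (j%:R * x0 x ^+ j.-1).
Proof.
rewrite derive_scale; last by apply: PFexp; apply: PFx.
by rewrite derive_exp ?derive_coord ?unitvE ?eqxx ?mulr1 //; apply: PFx.
Qed.

Lemma derive_x0_lift (c : R) j (i : 'I_m) (x : W) :
  'D_(unitv R (lift ord0 i)) (fun x : W => c * x0 x ^+ j) x = 0.
Proof.
rewrite derive_scale; last by apply: PFexp; apply: PFx.
rewrite derive_exp ?derive_coord ?unitvE; last by apply: PFx.
by rewrite eq_sym (negbTE (neq_lift _ _)) !mulr0.
Qed.
End Comp.
Section Coef.
Variables (R : realType) (m k : nat).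
Hypothesis m_gt0 : (0 < m)%N.

Definition acoef n j : R := 'C(n, j)%:R * Ccoef R m k n j.

Lemma beta_Bn s : (0 < s)%N -> beta R m k s = (Bn m k s)%:R.
Proof. by case: s => // s _; rewrite /beta /Bn /=; case: (odd s). Qed.

Lemma Bn_gt0 s : (0 < s)%N -> (0 < Bn m k s)%N.
Proof.
rewrite /Bn; case: s => // s _ /=; case: (odd s) => /=; lia.
Qed.

Lemma beta_neq0 s : beta R m k s != 0.
Proof.
case: s => [|s]; first by rewrite /beta /= oner_eq0.
by rewrite beta_Bn // pnatr_eq0 -lt0n Bn_gt0.
Qed.

Lemma coef1 n j : (j < n)%N -> acoef n j.+1 * j.+1%:R = acoef n j * (Bn m k (n - j))%:R.
Proof.
move=> Hj; rewrite /acoef /Ccoef.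
have [d Hd] : exists d, (n - j = d.+1)%N by exists (n - j).-1; rewrite prednK // subn_gt0.
have Hd' : (n - j.+1 = d)%N by rewrite subnS Hd.
rewrite Hd Hd' (big_ord_recr d.+1) /= -beta_Bn //.
have Hnat : ('C(n, j.+1) * j.+1 * d`! = 'C(n, j) * d.+1`!)%N.
  rewrite factS -[('C(n, j.+1) * j.+1)%N]mulnC mul_bin_left Hd; ring.
have HQ : \prod_(i < d.+1) beta R m k i != 0 by apply/prodf_neq0 => i _; apply: beta_neq0.
have Hb := beta_neq0 d.+1.
move/(congr1 (fun t : nat => t%:R : R)): Hnat; rewrite !natrM => Hnat.
rewrite invfM.
transitivity ('C(n, j.+1)%:R * j.+1%:R * d`!%:R / \prod_(i < d.+1) beta R m k i).
  by rewrite !mulrA; ring.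
rewrite Hnat; field; rewrite Hb HQ //.
Qed.

Lemma coef2 n j : acoef n.+1 j.+1 * j.+1%:R = n.+1%:R * acoef n j.
Proof.
rewrite /acoef /Ccoef subSS.
have := mul_bin_diag n.+1 j => /= /(congr1 (fun t : nat => t%:R : R)); rewrite !natrM => H.
rewrite [LHS]mulrC mulrA -H; ring.
Qed.

Lemma coef00 : acoef 0 0 = 1.
Proof. by rewrite /acoef /Ccoef bin0 big_ord1 /beta /= mul1r divr1. Qed.
End Coef.
Section Main.
Variables (R : realType) (m k : nat) (P : 'rV[R]_m -> Cl R m).
Local Notation W := 'rV[R]_(m.+1).

Definition Mf n (x : W) : Cl R m :=
  \sum_(j < n.+1) clscale (acoef R m k n j * x0 x ^+ j) (Gf P (n - j) (xvec x)).

Lemma appellM_Mf n x : appellM k P n x = Mf n x.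
Proof.
rewrite /appellM /Mf clmul_suml; apply: eq_bigr => j _.
by rewrite clmulZl.
Qed.

Definition Mterm n (j : nat) (x : W) : Cl R m :=
  clscale (acoef R m k n j * x0 x ^+ j) (Gf P (n - j) (xvec x)).

Lemma clP_Mterm n j : clP P -> clP (Mterm n j).
Proof.
move=> HP; apply: clP_scale; first exact: polyf_x0.
by apply: clP_xvec; apply: clP_G.
Qed.

Lemma clP_Mf n : clP P -> clP (Mf n).
Proof.
move=> HP; have -> : Mf n = fun x => \sum_(j <- index_enum 'I_n.+1) Mterm n j x by [].
by apply: clP_sum => j; apply: clP_Mterm.
Qed.

Lemma d0_Mf n x : clP P -> clpartial ord0 (Mf n) x =
  \sum_(j < n.+1) clscale (acoef R m k n j * (j%:R * x0 x ^+ j.-1)) (Gf P (n - j) (xvec x)).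
Proof.
move=> HP; have -> : Mf n = fun x => \sum_(j <- index_enum 'I_n.+1) Mterm n j x by [].
rewrite clpartial_sum; last by move=> j; apply: clP_Mterm.
apply: eq_bigr => j _; rewrite /Mterm clpartial_scale; first last.
- by apply: clP_xvec; apply: clP_G.
- exact: polyf_x0.
by rewrite derive_x0_0 (clpartial_xvec_0 (Gf P (n - j))) clscaler0 addr0.
Qed.

Lemma dl_Mf n i x : clP P -> clpartial (lift ord0 i) (Mf n) x =
  \sum_(j < n.+1) clscale (acoef R m k n j * x0 x ^+ j) (clpartial i (Gf P (n - j)) (xvec x)).
Proof.
move=> HP; have -> : Mf n = fun x => \sum_(j <- index_enum 'I_n.+1) Mterm n j x by [].
rewrite clpartial_sum; last by move=> j; apply: clP_Mterm.
apply: eq_bigr => j _; rewrite /Mterm clpartial_scale; first last.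
- by apply: clP_xvec; apply: clP_G.
- exact: polyf_x0.
by rewrite derive_x0_lift clscale0 add0r (clpartial_xvec_lift (Gf P (n - j))).
Qed.
End Main.
Section Main2.
Variables (R : realType) (m k : nat) (P : 'rV[R]_m -> Cl R m).
Hypothesis m_gt0 : (0 < m)%N.
Hypothesis HP : clP P.
Hypothesis HE : forall y, euler P y = clscale k%:R (P y).
Hypothesis HD : forall y, Defs.dirac P y = 0.
Local Notation W := 'rV[R]_(m.+1).

Lemma dirac_Mf n (x : W) :
  \sum_(i < m) clmul (clgen R i) (clpartial (lift ord0 i) (Mf k P n) x) =
  \sum_(j < n.+1) clscale (acoef R m k n j * x0 x ^+ j * (-1 * (Bn m k (n - j))%:R))
       (Gf P (n - j).-1 (xvec x)).
Proof.
under eq_bigr do rewrite dl_Mf // clmul_sumr.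
rewrite exchange_big /=; apply: eq_bigr => j _.
under eq_bigr do rewrite clmulZr.
by rewrite -clscale_sumr -/(Defs.dirac (Gf P (n - j)) (xvec x)) (dirac_G (k:=k)) // clscaleA.
Qed.

Lemma CR_Mf n (x : W) : cauchy_riemann (Mf k P n) x = 0.
Proof.
rewrite /cauchy_riemann d0_Mf // dirac_Mf.
rewrite big_ord_recl [X in _ + X]big_ord_recr /= subnn.
rewrite mul0r mulr0 clscale0 add0r.
have -> : (Bn m k 0)%:R = 0 :> R by [].
rewrite mulr0 mulr0 clscale0 addr0 -big_split big1 // => i _ /=.
rewrite /bump /= add0n add1n subnS -clscaleDl.
have -> : acoef R m k n i.+1 * (i.+1%:R * x0 x ^+ i) = acoef R m k n i.+1 * i.+1%:R * x0 x ^+ i by ring.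
rewrite coef1 //; set c := (_ + _ : R); have -> : c = 0 by rewrite /c; ring.
by rewrite clscale0.
Qed.
End Main2.
Section Main3.
Variables (R : realType) (m k : nat) (P : 'rV[R]_m -> Cl R m).
Hypothesis m_gt0 : (0 < m)%N.
Hypothesis HP : clP P.
Hypothesis HE : forall y, euler P y = clscale k%:R (P y).
Hypothesis HD : forall y, Defs.dirac P y = 0.
Local Notation W := 'rV[R]_(m.+1).

Lemma appell_Mf n (x : W) : (1 <= n)%N ->
  clscale 2^-1 (cauchy_riemann_conj (Mf k P n) x) = clscale n%:R (Mf k P n.-1 x).
Proof.
move=> Hn; have H := CR_Mf m_gt0 HP HE HD n x; rewrite /cauchy_riemann in H.
rewrite /cauchy_riemann_conj.
set D0 := clpartial ord0 _ x; set S := \sum_(j < m) _.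
have -> : S = - D0 by apply/eqP; rewrite -addr_eq0 addrC H.
have -> : D0 - - D0 = clscale (1 + 1) D0 by rewrite opprK clscaleDl clscale1.
rewrite clscaleA.
rewrite mulVf ?pnatr_eq0 // clscale1 /D0.
clear H S; case: n Hn D0 => // n _ D0 /=.
rewrite d0_Mf // big_ord_recl /= mul0r mulr0 clscale0 add0r.
rewrite /Mf clscale_sumr; apply: eq_bigr => i _.
rewrite clscaleA /bump /= add0n add1n subSS mulrA.
by rewrite coef2 -mulrA.
Qed.

Lemma M0 (x : W) : appellM k P 0 x = P (xvec x).
Proof.
by rewrite appellM_Mf /Mf big_ord1 /= coef00 expr0 mulr1 clscale1 subn0 Gf0.
Qed.
End Main3.
Unset Implicit Arguments.
Theorem mainTheorem1 (R : realType) (m k : nat) (P : 'rV[R]_m -> Cl R m) :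
  (0 < m)%N ->
  cl_homog_poly k P ->
  monogenic_Rm P ->
  (forall x : 'rV[R]_(m.+1), appellM k P 0 x = P (xvec x)) /\
  (forall n : nat, cl_poly (appellM k P n) /\ monogenic_Rm1 (appellM k P n)) /\
  (forall n : nat, (1 <= n)%N -> forall x : 'rV[R]_(m.+1),
     clscale 2^-1 (cauchy_riemann_conj (appellM k P n) x) = clscale n%:R (appellM k P n.-1 x)).
Proof.
move=> Hm Hh [HC HD].
have [HP HE] := euler_homog Hh.
have E n : appellM k P n = Mf k P n by apply: funext => x; apply: appellM_Mf.
split; first by move=> x; apply: M0.
split.
  move=> n; rewrite E; split; first exact/clP_poly/clP_Mf.
  split; first exact/clP_C1/clP_Mf.
  by move=> x; apply: CR_Mf.
by move=> n Hn x; rewrite !E; apply: appell_Mf.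
Qed.
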